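(* Let $\alpha:R\to R'$ be a Jordan homomorphism, let $R''$ be the subring of $R'$ generated by $R^\alpha$, and let $\overline\alpha:C\to C''$ be the (well defined) mapping $R(1,0)\cdot E(T)\mapsto R'(1',0')\cdot E(T^\alpha)$ for finite sequences $T$ in $R$. Then: (a) $\overline\alpha$ takes pairs of distant points to pairs of distant points; (b) $\overline\alpha$ is a harmonic mapping, i.e. it maps every harmonic quadruple of points of $C$ to a harmonic quadruple.
   Context: Rings are associative with $1$. A Jordan homomorphism $\alpha:R\to R'$ satisfies $(a+b)^\alpha=a^\alpha+b^\alpha$, $1^\alpha=1'$, $(aba)^\alpha=a^\alpha b^\alpha a^\alpha$. For $t$ in a ring, $E(t):=\begin{pmatrix} t&1\\-1&0\end{pmatrix}$; $E(T):=E(t_1)\cdots E(t_n)$ for $T=(t_1,\ldots,t_n)$ ($=I$ if $n=0$), $T^\alpha:=(t_1^\alpha,\ldots,t_n^\alpha)$. The projective line $\mathbb{P}(R)$ is the set of submodules $R(a,b)\leq R^2$ with $(a,b)$ the first row of a matrix in $GL_2(R)$, with right action $R(a,b)\cdot M=R((a,b)M)$. Points $R(a,b),R(c,d)$ are distant if $\{(a,b),(c,d)\}$ is a basis of $R^2$. $C$ is the connected component of $R(1,0)$ in the distant graph of $\mathbb{P}(R)$; $\mathbb{P}(R'')$ is identified with a subset of $\mathbb{P}(R')$ via $R''(a,b)\mapsto R'(a,b)$ and $C''$ is the connected component of $R''(1',0')$ in $\mathbb{P}(R'')$. A quadruple $(p_0,p_1,p_2,p_3)$ of points of $\mathbb{P}(R)$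 is harmonic (cross ratio $-1$) if there are $M\in GL_2(R)$ and a unit $u\in R^*$ with $p_0=R(1,0)M$, $p_1=R(0,1)M$, $p_2=R(u,1)M$, $p_3=R(-u,1)M$; harmonic quadruples and distant pairs in the image are understood in $\mathbb{P}(R')$. *)

(* Defs.v *)
(* Rings: associative with 1 (pzRingType, not necessarily
   commutative, 1 = 0 allowed). *)
From mathcomp Require Import all_boot all_order all_algebra.
Set Implicit Arguments. Unset Strict Implicit. Unset Printing Implicit Defensive.
Import GRing.Theory.
Local Open Scope ring_scope.

Definition jordan_hom (R R' : pzRingType) (f : R -> R') : Prop :=
  [/\ forall a b, f (a + b) = f a + f b,
      f 1 = 1 &
      forall a b, f (a * b * a) = f a * f b * f a].

Definition is_unit (R : pzRingType) (u : R) : Prop :=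
  exists v, u * v = 1 /\ v * u = 1.

Definition inGL2 (R : pzRingType) (M : 'M[R]_2) : Prop :=
  exists N : 'M[R]_2, M *m N = 1%:M /\ N *m M = 1%:M.

Definition pair2 (R : pzRingType) (a b : R) : 'rV[R]_2 :=
  \row_(j < 2) (if (j : nat) == 0%N then a else b).

Definition mx2 (R : pzRingType) (a b c d : R) : 'M[R]_2 :=
  \matrix_(i < 2, j < 2)
    (if (i : nat) == 0%N then (if (j : nat) == 0%N then a else b)
     else (if (j : nat) == 0%N then c else d)).

Definition Emx (R : pzRingType) (t : R) : 'M[R]_2 := mx2 t 1 (-1) 0.
Definition EmxS (R : pzRingType) (T : seq R) : 'M[R]_2 :=
  foldr (fun t M => Emx t *m M) 1%:M T.

(* The left submodule R x of R^2 generated by x (a "point" is such a set). *)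
Definition span1 (R : pzRingType) (x : 'rV[R]_2) : 'rV[R]_2 -> Prop :=
  fun v => exists r : R, v = r *: x.

Definition same_pt (R : pzRingType) (p q : 'rV[R]_2 -> Prop) : Prop :=
  forall v, p v <-> q v.

Definition is_point (R : pzRingType) (p : 'rV[R]_2 -> Prop) : Prop :=
  exists M : 'M[R]_2, inGL2 M /\ same_pt p (span1 (row 0 M)).

Definition basis2 (R : pzRingType) (x y : 'rV[R]_2) : Prop :=
  (forall v : 'rV[R]_2, exists r s : R, v = r *: x + s *: y) /\
  (forall r s r' s' : R, r *: x + s *: y = r' *: x + s' *: y -> r = r' /\ s = s').

Definition distant (R : pzRingType) (p q : 'rV[R]_2 -> Prop) : Prop :=
  exists x y : 'rV[R]_2,
    same_pt p (span1 x) /\ same_pt q (span1 y) /\ basis2 x y.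

(* harmonic quadruple (cross ratio -1); R(a,b)·M = R((a,b)M) *)
Definition harmonic (R : pzRingType) (p0 p1 p2 p3 : 'rV[R]_2 -> Prop) : Prop :=
  exists (M : 'M[R]_2) (u : R), inGL2 M /\ is_unit u /\
    same_pt p0 (span1 (pair2 1 0 *m M)) /\
    same_pt p1 (span1 (pair2 0 1 *m M)) /\
    same_pt p2 (span1 (pair2 u 1 *m M)) /\
    same_pt p3 (span1 (pair2 (- u) 1 *m M)).

Definition ptE (R : pzRingType) (T : seq R) : 'rV[R]_2 -> Prop :=
  span1 (pair2 1 0 *m EmxS T).

(* Main.v *)
Require Import Defs.
From mathcomp Require Import all_boot all_order all_algebra.
Set Implicit Arguments. Unset Strict Implicit. Unset Printing Implicit Defensive.
Import GRing.Theory.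
Local Open Scope ring_scope.

Notation i0 := (@ord0 1).
Notation i1 := (@ord_max 1).

Lemma ord2P (i : 'I_2) : i = i0 \/ i = i1.
Proof. case: i => [[|[|n]] Hn]; [left|right|by []]; exact: val_inj. Qed.

Section M2.
Variable R : pzRingType.
Implicit Types a b c d : R.

Lemma mx2E a b c d :
  [/\ mx2 a b c d i0 i0 = a, mx2 a b c d i0 i1 = b,
      mx2 a b c d i1 i0 = c & mx2 a b c d i1 i1 = d].
Proof. by rewrite !mxE. Qed.

Lemma mx2_ext (M : 'M[R]_2) : M = mx2 (M i0 i0) (M i0 i1) (M i1 i0) (M i1 i1).
Proof.
apply/matrixP => i j; rewrite mxE.
by case: (ord2P i) => ->; case: (ord2P j) => ->.
Qed.

Lemma sum2 (F : 'I_2 -> R) : \sum_(k < 2) F k = F i0 + F i1.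
Proof.
rewrite !big_ord_recl big_ord0 addr0 /=; congr (_ + F _); exact: val_inj.
Qed.

Lemma mulmx2 a b c d a' b' c' d' :
  mx2 a b c d *m mx2 a' b' c' d' =
  mx2 (a*a'+b*c') (a*b'+b*d') (c*a'+d*c') (c*b'+d*d').
Proof.
apply/matrixP => i j; rewrite !mxE sum2 !mxE.
by case: (ord2P i) => ->; case: (ord2P j) => ->.
Qed.

Lemma pair2_mx2 a b a' b' c' d' :
  pair2 a b *m mx2 a' b' c' d' = pair2 (a*a'+b*c') (a*b'+b*d').
Proof.
apply/matrixP => i j; rewrite !mxE sum2 !mxE.
by case: (ord2P j) => ->.
Qed.

Lemma pair2_scale r a b : r *: pair2 a b = pair2 (r * a) (r * b).
Proof. by apply/matrixP => i j; rewrite !mxE; case: (ord2P j) => ->. Qed.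

Lemma pair2_add a b a' b' : pair2 a b + pair2 a' b' = pair2 (a+a') (b+b').
Proof. by apply/matrixP => i j; rewrite !mxE; case: (ord2P j) => ->. Qed.

Lemma pair2_inj a b a' b' : pair2 a b = pair2 a' b' -> a = a' /\ b = b'.
Proof.
move=> /matrixP H; have := H ord0 i0; have := H ord0 i1; rewrite !mxE /= => -> -> //.
Qed.

Lemma mx2_1 : (1%:M : 'M[R]_2) = mx2 1 0 0 1.
Proof. by apply/matrixP => i j; rewrite !mxE; case: (ord2P i) => ->; case: (ord2P j) => ->. Qed.

End M2.

Ltac simp := rewrite ?mulr0 ?mul0r ?mulr1 ?mul1r ?addr0 ?add0r ?mulrN1 ?mulN1r ?opprK ?subrr ?addrN ?addNr ?oppr0 ?mulrN ?mulNr ?opprK.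

Lemma mx2_inj (R : pzRingType) (a b c d a' b' c' d' : R) :
  mx2 a b c d = mx2 a' b' c' d' -> [/\ a = a', b = b', c = c' & d = d'].
Proof.
move/matrixP => H.
by have := H i0 i0; have := H i0 i1; have := H i1 i0; have := H i1 i1; rewrite !mxE /= => -> -> -> ->.
Qed.


Section E.
Variable R : pzRingType.
Implicit Types (s : seq R) (t : R).

Lemma EmxS_cat s1 s2 : EmxS (s1 ++ s2) = EmxS s1 *m EmxS s2.
Proof. elim: s1 => [|t s IH] /=; first by rewrite mul1mx. by rewrite IH mulmxA. Qed.

Lemma EmxS_rcons s t : EmxS (rcons s t) = EmxS s *m Emx t.
Proof. by rewrite -cats1 EmxS_cat /= mulmx1. Qed.

Definition Jm : 'M[R]_2 := mx2 0 1 1 0.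

Lemma EJE t : Emx t *m Jm *m Emx t = Jm.
Proof.
rewrite /Emx /Jm !mulmx2.
by do 3 simp.
Qed.

Lemma F1 s : EmxS s *m Jm *m EmxS (rev s) = Jm.
Proof.
elim: s => [|t s IH]; first by rewrite /= mul1mx mulmx1.
rewrite rev_cons EmxS_rcons /=.
have -> : Emx t *m EmxS s *m Jm *m (EmxS (rev s) *m Emx t) =
  Emx t *m (EmxS s *m Jm *m EmxS (rev s)) *m Emx t by rewrite !mulmxA.
by rewrite IH EJE.
Qed.

Fixpoint invS s : seq R := if s is t :: s' then invS s' ++ [:: 0; -t; 0] else [::].

Lemma Einv_r t : Emx t *m EmxS [:: 0; -t; 0] = 1%:M.
Proof.
rewrite /= mulmx1 /Emx !mulmx2 mx2_1.
by do 3 simp.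
Qed.

Lemma Einv_l t : EmxS [:: 0; -t; 0] *m Emx t = 1%:M.
Proof.
rewrite /= mulmx1 /Emx !mulmx2 mx2_1.
by do 3 simp.
Qed.

Lemma EinvS_r s : EmxS s *m EmxS (invS s) = 1%:M.
Proof.
elim: s => [|t s IH]; first by rewrite /= mul1mx.
have -> : invS (t :: s) = invS s ++ [:: 0; -t; 0] by [].
have -> : EmxS (t :: s) = Emx t *m EmxS s by [].
rewrite EmxS_cat.
have -> : Emx t *m EmxS s *m (EmxS (invS s) *m EmxS [:: 0; -t; 0]) =
  Emx t *m (EmxS s *m EmxS (invS s)) *m EmxS [:: 0; -t; 0] by rewrite !mulmxA.
by rewrite IH mulmx1 Einv_r.
Qed.

Lemma EinvS_l s : EmxS (invS s) *m EmxS s = 1%:M.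
Proof.
elim: s => [|t s IH]; first by rewrite /= mul1mx.
have -> : invS (t :: s) = invS s ++ [:: 0; -t; 0] by [].
have -> : EmxS (t :: s) = Emx t *m EmxS s by [].
rewrite EmxS_cat.
have -> : EmxS (invS s) *m EmxS [:: 0; -t; 0] *m (Emx t *m EmxS s) =
  EmxS (invS s) *m (EmxS [:: 0; -t; 0] *m Emx t) *m EmxS s by rewrite !mulmxA.
by rewrite Einv_l mulmx1 IH.
Qed.

End E.

Section N.
Variable R : pzRingType.
Definition Dm : 'M[R]_2 := mx2 1 0 0 (-1).
Definition Nmat (Z : 'M[R]_2) (s : seq R) :=
  EmxS s *m Z *m Dm *m EmxS (rev s) *m Dm.

Lemma DD : Dm *m Dm = 1%:M.
Proof. by rewrite /Dm mulmx2 mx2_1; do 3 simp. Qed.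

Lemma DED t : Dm *m Emx t *m Dm = mx2 t (-1) 1 0.
Proof. by rewrite /Dm /Emx !mulmx2; do 3 simp. Qed.

Lemma Nmat_nil Z : Nmat Z [::] = Z.
Proof. by rewrite /Nmat /= mulmx1 -mulmxA DD mulmx1 mul1mx. Qed.

Lemma Nmat_cons Z t s : Nmat Z (t :: s) = Emx t *m Nmat Z s *m mx2 t (-1) 1 0.
Proof.
rewrite /Nmat rev_cons EmxS_rcons -DED.
have -> : EmxS (t :: s) = Emx t *m EmxS s by [].
rewrite !mulmxA; congr (_ *m _).
by rewrite -!mulmxA (mulmxA Dm Dm) DD mul1mx.
Qed.
End N.

Section F1e.
Variable R : pzRingType.
Lemma F1e (s : seq R) :
  let M := EmxS s in let W := EmxS (rev s) in
  [/\ M i0 i1 * W i0 i0 + M i0 i0 * W i1 i0 = 0,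
      W i0 i1 * M i0 i0 + W i0 i0 * M i1 i0 = 0,
      W i0 i1 * M i0 i1 + W i0 i0 * M i1 i1 = 1 &
      M i1 i1 * W i0 i0 + M i1 i0 * W i1 i0 = 1].
Proof.
have h1 := F1 s; have h2 := F1 (rev s); rewrite revK in h2.
rewrite (mx2_ext (EmxS s)) (mx2_ext (EmxS (rev s))) /Jm !mulmx2 in h1.
rewrite (mx2_ext (EmxS s)) (mx2_ext (EmxS (rev s))) /Jm !mulmx2 in h2.
move: h1 h2; do 3 simp.
by move=> /mx2_inj [e1 _ e3 _] /mx2_inj [e5 e6 _ _].
Qed.

Lemma Nmat00 (z : R) s :
  Nmat (mx2 z 1 0 0) s i0 i0 =
  EmxS s i0 i0 * z * EmxS (rev s) i0 i0 - EmxS s i0 i0 * EmxS (rev s) i1 i0.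
Proof.
rewrite /Nmat (mx2_ext (EmxS s)) (mx2_ext (EmxS (rev s))) /Dm !mulmx2 !mxE /=.
by do 3 simp.
Qed.
End F1e.


Section AC.
Variable R : pzRingType.
Lemma ac1 (x y z w : R) : (x + y) + (z + w) = x + (z + y) + w.
Proof. by rewrite !addrA (addrAC x y z). Qed.

Lemma rearr1 (x t a b2 b : R) :
  x * (-(t*a + b2)) + (-(a*t) - b) * x = -((x*t*a + a*t*x) + (x*b2 + b*x)).
Proof.
rewrite mulrN mulrDr opprD mulrBl mulNr !mulrA !opprD; exact: addrACA.
Qed.

Lemma rearr2 (x t a b2 b : R) :
  x * (-(a*t) - b) + (-(t*a + b2)) * x = -((x*a*t + t*a*x) + (x*b + b2*x)).
Proof.
rewrite mulrBr mulrN mulNr mulrDl opprD !mulrA !opprD; exact: addrACA.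
Qed.
End AC.

Section J.
Variables (R R' : pzRingType) (f : R -> R') (hf : jordan_hom f).

Lemma fD a b : f (a + b) = f a + f b. Proof. by case: hf. Qed.
Lemma f1 : f 1 = 1. Proof. by case: hf. Qed.
Lemma fJ a b : f (a * b * a) = f a * f b * f a. Proof. by case: hf. Qed.
Lemma f0 : f 0 = 0.
Proof. by apply: (@addrI _ (f 0)); rewrite -fD !addr0. Qed.
Lemma fN a : f (- a) = - f a.
Proof. by apply: (@addrI _ (f a)); rewrite -fD !subrr f0. Qed.
Lemma fB a b : f (a - b) = f a - f b. Proof. by rewrite fD fN. Qed.

Lemma fJ2 a b c : f (a * b * c + c * b * a) = f a * f b * f c + f c * f b * f a.
Proof.
have := fJ (a + c) b.
have E (A B C : R) : (A + B) * C * (A + B) = A*C*A + (A*C*B + B*C*A) + B*C*B.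
  by rewrite mulrDl !mulrDr !mulrDl !addrA; congr (_ + _); exact: addrAC.
have E' (A B C : R') : (A + B) * C * (A + B) = A*C*A + (A*C*B + B*C*A) + B*C*B.
  by rewrite mulrDl !mulrDr !mulrDl !addrA; congr (_ + _); exact: addrAC.
by rewrite E !fD E' !fJ => /addIr /addrI.
Qed.

Lemma JN_step t a b b2 c a' c' bb bb2 (H00 : f a = a') (H11 : f c = c')
  (HA : forall x, f (x*b + b2*x) = f x * bb + bb2 * f x)
  (HB : forall x, f (x*b2 + b*x) = f x * bb2 + bb * f x) :
  let N := Emx t *m mx2 a b b2 c *m mx2 t (-1) 1 0 in
  let N' := Emx (f t) *m mx2 a' bb bb2 c' *m mx2 (f t) (-1) 1 0 in
  [/\ f (N i0 i0) = N' i0 i0, f (N i1 i1) = N' i1 i1,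
      forall x, f (x * N i0 i1 + N i1 i0 * x) = f x * N' i0 i1 + N' i1 i0 * f x &
      forall x, f (x * N i1 i0 + N i0 i1 * x) = f x * N' i1 i0 + N' i0 i1 * f x].
Proof.
rewrite /= /Emx !mulmx2 !mxE /=; do 3 simp.
split.
- by rewrite !mulrDl ac1 ac1 fD fD fJ HA H00 H11.
- by rewrite H00.
- by move=> x; rewrite rearr1 rearr1 fN fD fJ2 HB H00.
- by move=> x; rewrite rearr2 rearr2 fN fD fJ2 HA H00.
Qed.

End J.

Section J2.
Variables (R R' : pzRingType) (f : R -> R') (hf : jordan_hom f).

Lemma JN z s :
  let N := Nmat (mx2 z 1 0 0) s in let N' := Nmat (mx2 (f z) 1 0 0) (map f s) in
  [/\ f (N i0 i0) = N' i0 i0, f (N i1 i1) = N' i1 i1,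
      forall x, f (x * N i0 i1 + N i1 i0 * x) = f x * N' i0 i1 + N' i1 i0 * f x &
      forall x, f (x * N i1 i0 + N i0 i1 * x) = f x * N' i1 i0 + N' i0 i1 * f x].
Proof.
elim: s => [|t s IH].
  rewrite /= !Nmat_nil !mxE /=; do 3 simp; rewrite ?(f0 hf) ?(f1 hf).
  by split => // x; do 3 simp.
rewrite /= !Nmat_cons (mx2_ext (Nmat _ s)) (mx2_ext (Nmat _ (map f s))).
case: IH => H00 H11 HA HB.
exact: JN_step.
Qed.
End J2.


Section G.
Variables (R R' : pzRingType) (f : R -> R') (hf : jordan_hom f).

Lemma Galg (a b c d p q r ai : R) (a' b' c' p' r' : R')
  (hA : forall z, f (a * z * p - a * r) = a' * f z * p' - a' * r')
  (hP : forall z, f (p * z * a - p * c) = p' * f z * a' - p' * c')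
  (Ha1 : a * ai = 1) (Ha2 : ai * a = 1)
  (e1 : b * p + a * r = 0) (e2 : q * a + p * c = 0) (e3 : q * b + p * d = 1)
  (e4 : d * p + c * r = 1) (e1' : b' * p' + a' * r' = 0) :
  exists ai', [/\ a' * ai' = 1, ai' * a' = 1 & f (ai * b) = ai' * b'].
Proof.
pose pi := d - c * ai * b.
have pc : p * c = - (q * a) by apply: (addrI (q * a)); rewrite e2 subrr.
have bp : b * p = - (a * r) by apply: (addrI (a * r)); rewrite addrC e1 subrr.
have hp1 : p * pi = 1.
  rewrite /pi mulrBr !mulrA pc !mulNr -(mulrA q a ai) Ha1 mulr1 opprK addrC; exact: e3.
have hp2 : pi * p = 1.
  have -> : pi * p = d * p - c * ai * (b * p) by rewrite /pi mulrBl !mulrA.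
  rewrite bp mulrN opprK mulrA -(mulrA c ai a) Ha2 mulr1; exact: e4.
have hA0 : f (a * r) = a' * r'.
  have := hA 0; rewrite (f0 hf) !mulr0 !mul0r !sub0r (fN hf); exact: oppr_inj.
have hA1 z : f (a * z * p) = a' * f z * p'.
  by have := hA z; rewrite (fB hf) hA0 => /addIr.
have hP0 : f (p * c) = p' * c'.
  have := hP 0; rewrite (f0 hf) !mulr0 !mul0r !sub0r (fN hf); exact: oppr_inj.
have hP1 z : f (p * z * a) = p' * f z * a'.
  by have := hP z; rewrite (fB hf) hP0 => /addIr.
have u1 : a' * (f (ai * pi) * p') = 1.
  by rewrite mulrA -hA1 mulrA Ha1 mul1r hp2 (f1 hf).
have u2 : p' * f (pi * ai) * a' = 1.
  by rewrite -hP1 mulrA hp1 mul1r Ha2 (f1 hf).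
have u3 : p' * (f (pi * ai) * a') = 1 by rewrite mulrA.
have u4 : a' * f (ai * pi) * p' = 1 by rewrite -mulrA.
pose ai' := f (ai * pi) * p'.
pose pi' := f (pi * ai) * a'.
have ai'a : ai' * a' = 1.
  have -> : ai' = p' * f (pi * ai).
    by rewrite -[ai']mul1r -u2 -!mulrA u1 mulr1.
  exact: u2.
have pi'p : pi' * p' = 1.
  have -> : pi' = a' * f (ai * pi).
    by rewrite -[pi']mul1r -u4 -!mulrA u3 mulr1.
  exact: u4.
exists ai'; split => //.
have bE : ai * b = - (r * pi).
  by rewrite -[b]mulr1 -hp1 (mulrA b p pi) bp mulNr mulrN !mulrA Ha2 mul1r.
have bE' : ai' * b' = - (r' * pi').
  have bp' : b' * p' = - (a' * r') by apply: (addrI (a' * r')); rewrite addrC e1' subrr.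
  by rewrite -[b']mulr1 -u3 -/pi' (mulrA b' p' pi') bp' mulNr mulrN !mulrA ai'a mul1r.
rewrite bE bE' (fN hf); congr (- _).
have h := hA1 (r * pi).
rewrite -(mulrA a) -(mulrA r) hp2 mulr1 hA0 in h.
have -> : f (r * pi) = ai' * (a' * f (r * pi) * p') * pi'.
  have u3' : p' * pi' = 1 by exact: u3.
  by rewrite !mulrA ai'a mul1r -!mulrA u3 mulr1.
by rewrite -h mulrA ai'a mul1r.
Qed.

Lemma Glem s ai : EmxS s i0 i0 * ai = 1 -> ai * EmxS s i0 i0 = 1 ->
  exists ai', [/\ EmxS (map f s) i0 i0 * ai' = 1, ai' * EmxS (map f s) i0 i0 = 1 &
    f (ai * EmxS s i0 i1) = ai' * EmxS (map f s) i0 i1].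
Proof.
move=> Ha1 Ha2.
have hA z : f (EmxS s i0 i0 * z * EmxS (rev s) i0 i0 - EmxS s i0 i0 * EmxS (rev s) i1 i0)
   = EmxS (map f s) i0 i0 * f z * EmxS (rev (map f s)) i0 i0
     - EmxS (map f s) i0 i0 * EmxS (rev (map f s)) i1 i0.
  by have [h _ _ _] := JN hf z s; rewrite !Nmat00 in h.
have hP z : f (EmxS (rev s) i0 i0 * z * EmxS s i0 i0 - EmxS (rev s) i0 i0 * EmxS s i1 i0)
   = EmxS (rev (map f s)) i0 i0 * f z * EmxS (map f s) i0 i0
     - EmxS (rev (map f s)) i0 i0 * EmxS (map f s) i1 i0.
  have [h _ _ _] := JN hf z (rev s); rewrite !Nmat00 in h.
  by rewrite map_rev !revK in h.
have [e1 e2 e3 e4] := F1e s.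
have [e1' e2' e3' e4'] := F1e (map f s).
move: hA hP Ha1 Ha2 e1 e2 e3 e4 e1' e2' e3' e4'.
set a := EmxS s i0 i0; set b := EmxS s i0 i1; set c := EmxS s i1 i0; set d := EmxS s i1 i1.
set p := EmxS (rev s) i0 i0; set q := EmxS (rev s) i0 i1; set r := EmxS (rev s) i1 i0.
set a' := EmxS (map f s) i0 i0; set b' := EmxS (map f s) i0 i1; set c' := EmxS (map f s) i1 i0.
set d' := EmxS (map f s) i1 i1.
set p' := EmxS (rev (map f s)) i0 i0; set q' := EmxS (rev (map f s)) i0 i1.
set r' := EmxS (rev (map f s)) i1 i0.
move=> hA hP Ha1 Ha2 e1 e2 e3 e4 e1' e2' e3' e4'.
exact: (Galg hA hP Ha1 Ha2 e1 e2 e3 e4 e1').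
Qed.
End G.


Definition row0E (R : pzRingType) (s : seq R) := pair2 1 0 *m EmxS s.

Section Aux.
Variable R : pzRingType.
Lemma row0E_pair (M : 'M[R]_2) : pair2 1 0 *m M = pair2 (M i0 i0) (M i0 i1).
Proof.
have -> : pair2 1 0 *m M = pair2 1 0 *m mx2 (M i0 i0) (M i0 i1) (M i1 i0) (M i1 i1)
  by rewrite -mx2_ext.
by rewrite pair2_mx2; do 3 simp.
Qed.

Lemma E3 (s0 : seq R) t0 t :
  (EmxS s0 *m Emx t0 *m Emx t) i0 i1 = EmxS s0 i0 i0 * t0 - EmxS s0 i0 i1 /\
  (EmxS s0 *m Emx t0 *m Emx t) i0 i0 =
    (EmxS s0 i0 i0 * t0 - EmxS s0 i0 i1) * t - EmxS s0 i0 i0.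
Proof.
have -> : EmxS s0 *m Emx t0 *m Emx t = mx2 (EmxS s0 i0 i0) (EmxS s0 i0 i1)
   (EmxS s0 i1 i0) (EmxS s0 i1 i1) *m Emx t0 *m Emx t by rewrite -mx2_ext.
by rewrite /Emx !mulmx2 !mxE /=; do 3 simp.
Qed.

Lemma triv_ring (h : (1 : R) = 0) (x : R) : x = 0.
Proof. by rewrite -[x]mulr1 h mulr0. Qed.

Lemma unit_triv (h : (1 : R) = 0) (x : R) : is_unit x.
Proof. by exists 0; rewrite !(triv_ring h (_ * _)) (triv_ring h 1). Qed.
Lemma pair_x1 (x : R) : pair2 x 1 = pair2 1 0 *m EmxS [:: x].
Proof. by rewrite /= mulmx1 /Emx pair2_mx2; do 3 simp. Qed.
End Aux.

Section W.
Variables (R R' : pzRingType) (f : R -> R') (hf : jordan_hom f).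

Lemma map_invS s : map f (invS s) = invS (map f s).
Proof. by elim: s => [|t s IH] //=; rewrite map_cat IH /= (f0 hf) (fN hf). Qed.

Lemma W0 U : EmxS U i0 i1 = 0 -> is_unit (EmxS U i0 i0) ->
  EmxS (map f U) i0 i1 = 0 /\ is_unit (EmxS (map f U) i0 i0).
Proof.
case/lastP: U => [|s t].
  by move=> _ _; rewrite /= !mxE /=; split => //; exists 1; rewrite mulr1.
rewrite map_rcons !EmxS_rcons.
case/lastP: s => [|s0 t0].
  rewrite /= !mul1mx !mxE /= => h _.
  have h' : (1 : R') = 0 by rewrite -(f1 hf) h (f0 hf).
  by split; [exact: triv_ring | exact: unit_triv].
rewrite map_rcons !EmxS_rcons.
have [-> ->] := E3 s0 t0 t.
have [-> ->] := E3 (map f s0) (f t0) (f t).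
move=> h0; rewrite h0 mul0r sub0r => [[v [hv1 hv2]]].
have Ha1 : EmxS s0 i0 i0 * (- v) = 1 by rewrite mulrN -mulNr.
have Ha2 : (- v) * EmxS s0 i0 i0 = 1 by rewrite mulNr -mulrN.
have [ai' [h1 h2 h3]] := Glem hf Ha1 Ha2.
have et0 : t0 = - v * EmxS s0 i0 i1.
  by rewrite -[t0]mul1r -Ha2 -mulrA; move/eqP: h0; rewrite subr_eq0 => /eqP ->.
have e' : EmxS (map f s0) i0 i0 * f t0 - EmxS (map f s0) i0 i1 = 0.
  by rewrite et0 h3 mulrA h1 mul1r subrr.
rewrite e' mul0r sub0r; split => //.
by exists (- ai'); rewrite !mulrNN.
Qed.
End W.

Section C.
Variables (R R' : pzRingType) (f : R -> R') (hf : jordan_hom f).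


Lemma Cl U x lam : is_unit lam -> row0E U = lam *: pair2 x 1 ->
  exists lam', is_unit lam' /\ row0E (map f U) = lam' *: pair2 (f x) 1.
Proof.
move=> hl hU.
have hU' : row0E (U ++ invS [:: x]) = pair2 lam 0.
  rewrite /row0E EmxS_cat mulmxA -/(row0E U) hU -scalemxAl pair_x1.
  by rewrite -mulmxA EinvS_r mulmx1 pair2_scale; do 3 simp.
move: hU'; rewrite {1}/row0E row0E_pair => /pair2_inj [h00 h01].
have hu : is_unit (EmxS (U ++ invS [:: x]) i0 i0) by rewrite h00.
have [] := W0 hf h01 hu.
rewrite map_cat (map_invS hf) => h01' hu'.
exists (EmxS (map f U ++ invS (map f [:: x])) i0 i0); split => //.
have e : EmxS (map f U ++ invS (map f [:: x])) *m EmxS (map f [:: x]) = EmxS (map f U).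
  by rewrite EmxS_cat -mulmxA EinvS_l mulmx1.
have -> : row0E (map f U) = row0E (map f U ++ invS (map f [:: x])) *m EmxS (map f [:: x]).
  by rewrite /row0E -mulmxA e.
by rewrite /row0E row0E_pair h01' (pair_x1 (f x)) /= !mulmx1 /Emx !pair2_mx2 pair2_scale; do 3 simp.
Qed.
End C.


Section Gen.
Variable R : pzRingType.
Implicit Types (v w x y : 'rV[R]_2).

Definition freev v := forall r s : R, r *: v = s *: v -> r = s.

Lemma pair2_row v : v = pair2 (v ord0 i0) (v ord0 i1).
Proof. by apply/matrixP => i j; rewrite (ord1 i) !mxE; case: (ord2P j) => ->. Qed.

Lemma free_mul v (N N' : 'M[R]_2) : N *m N' = 1%:M -> freev v -> freev (v *m N).
Proof.
move=> hN hv r s e; apply: hv.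
have := congr1 (mulmx^~ N') e; rewrite -!scalemxAl -!mulmxA hN !mulmx1 //.
Qed.

Lemma free_c1 (c : R) : freev (pair2 c 1).
Proof. by move=> r r'; rewrite !pair2_scale => /pair2_inj [_]; rewrite !mulr1. Qed.

Lemma free_10 : freev (pair2 (1 : R) 0).
Proof. by move=> r r'; rewrite !pair2_scale => /pair2_inj []; rewrite !mulr1. Qed.

Lemma free_row0E s : freev (row0E s).
Proof.
apply: (free_mul (N' := EmxS (invS s))); first exact: EinvS_r.
exact: free_10.
Qed.

Lemma same_unit v w : freev v -> freev w -> same_pt (span1 v) (span1 w) ->
  exists l, is_unit l /\ v = l *: w.
Proof.
move=> hv hw H.
have [l hl] : span1 w v by apply/H; exists 1; rewrite scale1r.
have [m hm] : span1 v w by apply/H; exists 1; rewrite scale1r.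
exists l; split => //; exists m; split.
- apply: hv; rewrite scale1r -scalerA -hm -hl //.
- apply: hw; rewrite scale1r -scalerA -hl -hm //.
Qed.

Lemma span1_unit (l : R) v : is_unit l -> same_pt (span1 (l *: v)) (span1 v).
Proof.
move=> [li [h1 h2]] u; split.
- by move=> [r ->]; exists (r * l); rewrite scalerA.
- by move=> [r ->]; exists (r * li); rewrite scalerA -mulrA h2 mulr1.
Qed.

Lemma same_pt_refl (p : 'rV[R]_2 -> Prop) : same_pt p p.
Proof. by []. Qed.

Lemma basis2_scale x y (l1 l2 : R) : is_unit l1 -> is_unit l2 -> basis2 x y ->
  basis2 (l1 *: x) (l2 *: y).
Proof.
move=> [i1 [a1 a2]] [i2 [b1 b2]] [hs hu]; split.
- move=> v; have [r [s ->]] := hs v; exists (r * i1), (s * i2).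
  by rewrite !scalerA -!mulrA a2 b2 !mulr1.
- move=> r s r' s'; rewrite !scalerA => /hu [e1 e2]; split.
  + by rewrite -[r]mulr1 -a1 mulrA e1 -mulrA a1 mulr1.
  + by rewrite -[s]mulr1 -b1 mulrA e2 -mulrA b1 mulr1.
Qed.

Lemma basis2_mul x y (N N' : 'M[R]_2) : N *m N' = 1%:M -> N' *m N = 1%:M ->
  basis2 x y -> basis2 (x *m N) (y *m N).
Proof.
move=> h1 h2 [hs hu]; split.
- move=> v; have [r [s e]] := hs (v *m N'); exists r, s.
  by rewrite !scalemxAl -mulmxDl -e -mulmxA h2 mulmx1.
- move=> r s r' s' e; apply: hu.
  have := congr1 (mulmx^~ N') e; rewrite !mulmxDl -!scalemxAl -!mulmxA h1 !mulmx1 //.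
Qed.

Lemma basis_lower (a b : R) : basis2 (pair2 1 0) (pair2 a b) -> is_unit b.
Proof.
move=> [hs hu].
have [r [s]] := hs (pair2 0 1).
rewrite !pair2_scale pair2_add => /pair2_inj [_]; rewrite mulr0 add0r => sb.
exists s; split => //.
pose c := b * s - 1.
have cb : c * b = 0 by rewrite /c mulrBl -mulrA -sb mulr1 mul1r subrr.
have := hu 0 c (c * a) 0.
rewrite !scale0r add0r addr0 !pair2_scale mulr1 mulr0 cb => /(_ erefl) [_].
by move=> hc; apply/eqP; rewrite -subr_eq0; apply/eqP; exact: hc.
Qed.

Lemma basis_lower_conv (a b : R) : is_unit b -> basis2 (pair2 1 0) (pair2 a b).
Proof.
move=> [bi [h1 h2]]; split.
- move=> v; rewrite {1}(pair2_row v); exists (v ord0 i0 - v ord0 i1 * bi * a), (v ord0 i1 * bi).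
  by rewrite !pair2_scale pair2_add mulr1 mulr0 add0r -(mulrA _ bi b) h2 mulr1 subrK.
- move=> r s r' s'; rewrite !pair2_scale !pair2_add !mulr1 !mulr0 !add0r.
  move=> /pair2_inj [e1 e2].
  have es : s = s' by rewrite -[s]mulr1 -h1 mulrA e2 -mulrA h1 mulr1.
  by split => //; move: e1; rewrite es => /addIr.
Qed.

Lemma inGL2_E (s : seq R) : inGL2 (EmxS s).
Proof. by exists (EmxS (invS s)); rewrite EinvS_r EinvS_l. Qed.

Lemma lowtri (M N : 'M[R]_2) : M *m N = 1%:M -> N *m M = 1%:M ->
  M i0 i1 = 0 -> is_unit (M i0 i0) -> is_unit (M i1 i1).
Proof.
rewrite (mx2_ext M) (mx2_ext N) !mulmx2 mx2_1 !mxE /= => /mx2_inj [_ e01 _ e11]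
  /mx2_inj [_ _ _ f11] z [mi [m1 m2]].
move: e01 e11 f11; rewrite z mul0r mulr0 !add0r addr0 => e01.
have n01 : N i0 i1 = 0 by rewrite -[N i0 i1]mul1r -m2 -mulrA e01 mulr0.
rewrite n01 mulr0 add0r => e11 f11.
by exists (N i1 i1).
Qed.
End Gen.


Lemma unit_mul (R : pzRingType) (a b : R) : is_unit a -> is_unit b -> is_unit (a * b).
Proof.
move=> [ai [a1 a2]] [bi [b1 b2]]; exists (bi * ai); split.
- by rewrite -mulrA (mulrA b) b1 mul1r a1.
- by rewrite -mulrA (mulrA ai) a2 mul1r b2.
Qed.

Section Main.
Variables (R R' : pzRingType) (f : R -> R') (hf : jordan_hom f).

Lemma funit u : is_unit u -> is_unit (f u).
Proof.
move=> [v [h1 h2]].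
have e1 : u * (v * v) * u = 1 by rewrite mulrA h1 mul1r h2.
have L : f u * (f (v * v) * f u) = 1 by rewrite mulrA -(fJ hf) e1 (f1 hf).
have L2 : f u * f (v * v) * f u = 1 by rewrite -(fJ hf) e1 (f1 hf).
exists (f (v * v) * f u); split => //.
have -> : f (v * v) * f u = f u * f (v * v).
  by rewrite -[LHS]mul1r -L2 -!mulrA L mulr1.
exact: L2.
Qed.

Lemma partA T1 T2 : distant (ptE T1) (ptE T2) -> distant (ptE (map f T1)) (ptE (map f T2)).
Proof.
move=> [x [y [h1 [h2 hb]]]].
have fx : freev x.
  by move=> r s e; have := (proj2 hb) r 0 s 0; rewrite !scale0r !addr0 => /(_ e) [].
have fy : freev y.
  by move=> r s e; have := (proj2 hb) 0 r 0 s; rewrite !scale0r !add0r => /(_ e) [].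
have [l1 [hl1 e1]] := same_unit (@free_row0E _ T1) fx h1.
have [l2 [hl2 e2]] := same_unit (@free_row0E _ T2) fy h2.
have hb1 : basis2 (row0E T1) (row0E T2) by rewrite e1 e2; exact: basis2_scale.
have hb2 := basis2_mul (EinvS_l T1) (EinvS_r T1) hb1.
have r1 : row0E T1 *m EmxS (invS T1) = pair2 1 0 by rewrite /row0E -mulmxA EinvS_r mulmx1.
have r2 : row0E T2 *m EmxS (invS T1) = row0E (T2 ++ invS T1) by rewrite /row0E EmxS_cat mulmxA.
rewrite r1 r2 {1}/row0E row0E_pair in hb2.
have hbu := basis_lower hb2.
have [bi [hbi1 hbi2]] := hbu.
have hU : row0E (T2 ++ invS T1) =
   EmxS (T2 ++ invS T1) i0 i1 *: pair2 (bi * EmxS (T2 ++ invS T1) i0 i0) 1.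
  by rewrite /row0E row0E_pair pair2_scale mulrA hbi1 mul1r mulr1.
have [l' [hl' e']] := Cl hf hbu hU.
rewrite map_cat (map_invS hf) in e'.
exists (row0E (map f T1)), (row0E (map f T2)); split; first exact: same_pt_refl.
split; first exact: same_pt_refl.
have -> : row0E (map f T2) = row0E (map f T2 ++ invS (map f T1)) *m EmxS (map f T1).
  by rewrite /row0E EmxS_cat -!mulmxA EinvS_l mulmx1.
rewrite e' /row0E.
apply: basis2_mul (EinvS_r _) (EinvS_l _) _.
by rewrite pair2_scale mulr1; exact: basis_lower_conv.
Qed.

Lemma pt_shift (g c : R') (X : 'M[R']_2) :
  pair2 c 1 *m (mx2 1 0 g 1 *m X) = pair2 (c + g) 1 *m X.
Proof. by rewrite mulmxA pair2_mx2; do 3 simp. Qed.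

Lemma partB T0 T1 T2 T3 :
  harmonic (ptE T0) (ptE T1) (ptE T2) (ptE T3) ->
  harmonic (ptE (map f T0)) (ptE (map f T1)) (ptE (map f T2)) (ptE (map f T3)).
Proof.
move=> [M [u [[N [hMN hNM]] [hu [h0 [h1 [h2 h3]]]]]]].
have [l0 [hl0 e0]] := same_unit (@free_row0E _ T0) (free_mul hMN (@free_10 R)) h0.
have [li0 [hli1 hli2]] := hl0.
set M1 := M *m EmxS (invS T0).
have M1a : M1 *m (EmxS T0 *m N) = 1%:M.
  by rewrite /M1 -!mulmxA (mulmxA (EmxS (invS T0))) EinvS_l mul1mx hMN.
have M1b : (EmxS T0 *m N) *m M1 = 1%:M.
  by rewrite /M1 -!mulmxA (mulmxA N) hNM mul1mx EinvS_r.
have r0 : pair2 1 0 *m M1 = pair2 li0 0.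
  have : row0E T0 *m EmxS (invS T0) = pair2 1 0 by rewrite /row0E -mulmxA EinvS_r mulmx1.
  rewrite e0 -scalemxAl -mulmxA -/M1 => e.
  have -> : pair2 1 0 *m M1 = li0 *: (l0 *: (pair2 1 0 *m M1)) by rewrite scalerA hli2 scale1r.
  by rewrite e pair2_scale mulr1 mulr0.
move: r0; rewrite row0E_pair => /pair2_inj [m00 m01].
have hli : is_unit li0 by exists l0.
have hd : is_unit (M1 i1 i1) by apply: (lowtri M1a M1b m01); rewrite m00.
have [di [hd1 hd2]] := hd.
have key T c : same_pt (ptE T) (span1 (pair2 c 1 *m M)) ->
  exists l', is_unit l' /\ row0E (map f T) =
    l' *: (pair2 (f (di * (c * li0 + M1 i1 i0))) 1 *m EmxS (map f T0)).
  move=> h.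
  have [l [hl e]] := same_unit (@free_row0E _ T) (free_mul hMN (@free_c1 _ c)) h.
  have eU : row0E (T ++ invS T0) = (l * M1 i1 i1) *: pair2 (di * (c * li0 + M1 i1 i0)) 1.
    rewrite /row0E EmxS_cat mulmxA -/(row0E T) e -scalemxAl -mulmxA -/M1.
    have -> : pair2 c 1 *m M1 = pair2 (c * li0 + M1 i1 i0) (M1 i1 i1).
      by rewrite {1}(mx2_ext M1) m00 m01 pair2_mx2; do 3 simp.
    rewrite !pair2_scale mulr1.
    by rewrite -(mulrA l) (mulrA (M1 i1 i1)) hd1 mul1r.
  have [l' [hl' e']] := Cl hf (unit_mul hl hd) eU.
  rewrite map_cat (map_invS hf) in e'.
  exists l'; split => //.
  have -> : row0E (map f T) = row0E (map f T ++ invS (map f T0)) *m EmxS (map f T0).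
    by rewrite /row0E EmxS_cat -!mulmxA EinvS_l mulmx1.
  by rewrite e' scalemxAl.
pose g := f (di * M1 i1 i0).
pose w := di * (u * li0).
exists (mx2 1 0 g 1 *m EmxS (map f T0)), (f w).
split.
  exists (EmxS (invS (map f T0)) *m mx2 1 0 (-g) 1); split.
    rewrite -!mulmxA (mulmxA (EmxS _)) EinvS_r mul1mx mulmx2 mx2_1; do 3 simp.
    by [].
  rewrite -!mulmxA (mulmxA (mx2 _ _ _ _)) mulmx2 mx2_1; do 3 simp.
  by rewrite -mx2_1 mul1mx EinvS_l.
split.
  by apply: funit; apply: unit_mul => //; [exists (M1 i1 i1) | exact: unit_mul].
split.
  rewrite mulmxA pair2_mx2; do 3 simp; exact: same_pt_refl.
split.
  have [l' [hl' e']] := key T1 0 h1.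
  rewrite mul0r add0r in e'.
  change (same_pt (span1 (row0E (map f T1))) (span1 (pair2 0 1 *m (mx2 1 0 g 1 *m EmxS (map f T0))))).
  by rewrite pt_shift add0r e'; exact: span1_unit.
split.
  have [l' [hl' e']] := key T2 u h2.
  rewrite mulrDr (fD hf) in e'.
  change (same_pt (span1 (row0E (map f T2))) (span1 (pair2 (f w) 1 *m (mx2 1 0 g 1 *m EmxS (map f T0))))).
  by rewrite pt_shift e'; exact: span1_unit.
have [l' [hl' e']] := key T3 (- u) h3.
rewrite mulNr mulrDr mulrN (fD hf) (fN hf) in e'.
change (same_pt (span1 (row0E (map f T3))) (span1 (pair2 (- f w) 1 *m (mx2 1 0 g 1 *m EmxS (map f T0))))).
by rewrite pt_shift e'; exact: span1_unit.
Qed.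
End Main.


                                                                         
Theorem proposition4p8 (R R' : pzRingType) (f : R -> R') (hf : jordan_hom f) :
  (forall T1 T2 : seq R,
     distant (ptE T1) (ptE T2) ->
     distant (ptE (map f T1)) (ptE (map f T2))) /\
  (forall T0 T1 T2 T3 : seq R,
     harmonic (ptE T0) (ptE T1) (ptE T2) (ptE T3) ->
     harmonic (ptE (map f T0)) (ptE (map f T1)) (ptE (map f T2)) (ptE (map f T3))).
Proof.
split; [exact: partA | exact: partB].
Qed.
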